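(* A real Banach space $\mathbb{X}$ is a Hilbert space (i.e., its norm is induced by an inner product) if and only if for every $x\in S_{\mathbb{X}}$ and every $r>0$, $(x,x)$ is a CPP with CPP constant $(r,1)$.
   Context: $\mathbb{X}$ has dimension greater than $1$. $B(x,r)=\{u:\|u-x\|<r\}$. $x\perp_B y$ means $\|x+\lambda y\|\ge\|x\|$ for all real $\lambda$; $x^\perp=\{y:x\perp_By\}$. For $x,y\in S_{\mathbb{X}}$ and $r,\mu>0$, $(x,y)$ is a CPP with CPP constant $(r,\mu)$ if for all $z\in x^\perp\cap S_{\mathbb{X}}$, all $w\in y^\perp\cap S_{\mathbb{X}}$ and all $a,b\in\mathbb{R}$, $ax+bz\in B(x,r)\cap S_{\mathbb{X}}$ implies $\|ay+b\mu w\|\le1$. *)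

(* Defs.v *)
From HB Require Import structures.
From mathcomp Require Import all_boot all_order all_algebra.
From mathcomp Require Import all_classical all_reals all_analysis.
Set Implicit Arguments. Unset Strict Implicit. Unset Printing Implicit Defensive.
Import Order.TTheory GRing.Theory Num.Theory.
Import numFieldNormedType.Exports.
Local Open Scope ring_scope.

Section CPP.
Variables (R : realType) (V : normedModType R).

Definition BJorth (x y : V) : Prop := forall l : R, `|x| <= `|x + l *: y|.

Definition unit_sphere (x : V) : Prop := `|x| = 1.

Definition open_ball (x : V) (r : R) (u : V) : Prop := `|u - x| < r.

Definition is_CPP (x y : V) (r mu : R) : Prop :=
  [/\ unit_sphere x, unit_sphere y, 0 < r, 0 < mu &
  forall (z w : V) (a b : R),
    BJorth x z -> unit_sphere z -> BJorth y w -> unit_sphere w ->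
    open_ball x r (a *: x + b *: z) -> unit_sphere (a *: x + b *: z) ->
    `|a *: y + (b * mu) *: w| <= 1].

Definition is_inner_product_space : Prop :=
  exists ip : V -> V -> R,
    [/\ forall x y, ip x y = ip y x,
        forall a x y z, ip (a *: x + y) z = a * ip x z + ip y z &
        forall x, `|x| = Num.sqrt (ip x x)].

Definition dim_gt1 : Prop :=
  exists x y : V, forall a b : R, a *: x + b *: y = 0 -> a = 0 /\ b = 0.

End CPP.

(* Main.v *)
Require Import Defs.
From HB Require Import structures.
From mathcomp Require Import all_boot all_order all_algebra.
From mathcomp Require Import all_classical all_reals all_analysis.
From mathcomp Require Import ring lra.
Import Order.TTheory GRing.Theory Num.Theory.
Import numFieldNormedType.Exports.
Local Open Scope ring_scope.

Definition HCPP {R : realType} (V : normedModType R) :=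
  forall (x : V) (r : R), unit_sphere x -> 0 < r -> is_CPP x x r 1.

Lemma bj_scale {R : realType} {V : normedModType R} (u v : V) (s t : R) :
  BJorth u v -> BJorth (s *: u) (t *: v).
Proof.
move=> H l.
have [->|s0] := eqVneq s 0.
  by rewrite scale0r normr0 normr_ge0.
have -> : s *: u + l *: (t *: v) = s *: (u + (l * t / s) *: v).
  by rewrite scalerDr !scalerA; congr (_ + _ *: _); field.
rewrite !normrZ ler_wpM2l //.
Qed.

Lemma bj0 {R : realType} {V : normedModType R} (v : V) : BJorth 0 v.
Proof. by move=> l; rewrite normr0 normr_ge0. Qed.

Lemma refl_le {R : realType} {V : normedModType R} (HC : HCPP V) (u v : V) :
  BJorth u v -> `|u - v| <= `|u + v|.
Proof.
move=> H.
have [->|u0] := eqVneq u 0; first by rewrite sub0r add0r normrN.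
have [->|v0] := eqVneq v 0; first by rewrite addr0 subr0.
set T := `|u + v|.
have [T0|Tpos] := eqVneq T 0.
  have uv : v = - u by apply/eqP; rewrite -addr_eq0 addrC; apply/eqP/normr0_eq0.
  have := H 1; rewrite scale1r uv subrr normr0 => h.
  by move: u0; rewrite -normr_eq0 eq_le h normr_ge0.
have Tp : 0 < T by rewrite lt_def Tpos normr_ge0.
have nu : 0 < `|u| by rewrite normr_gt0.
have nv : 0 < `|v| by rewrite normr_gt0.
set x := `|u|^-1 *: u.
set z := `|v|^-1 *: v.
have ux : unit_sphere x by rewrite /unit_sphere /x normrZ ger0_norm ?invr_ge0 ?normr_ge0 // mulVf // gt_eqF.
have uz : unit_sphere z by rewrite /unit_sphere /z normrZ ger0_norm ?invr_ge0 ?normr_ge0 // mulVf // gt_eqF.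
have uz' : unit_sphere (- z) by rewrite /unit_sphere normrN.
have bxz : BJorth x z by apply: bj_scale.
have bxz' : BJorth x (- z) by rewrite -scaleN1r /z scalerA; apply: bj_scale.
have h3 : (0:R) < 3 by lra.
have [_ _ _ _ HH] := HC x 3 ux h3.
have e1 : (`|u| / T) *: x + (`|v| / T) *: z = T^-1 *: (u + v).
  rewrite /x /z !scalerA scalerDr; congr (_ *: _ + _ *: _); field; apply/andP; split; by rewrite gt_eqF.
have e2 : (`|u| / T) *: x + (`|v| / T * 1) *: (- z) = T^-1 *: (u - v).
  rewrite mulr1 /x /z scalerN !scalerA scalerDr scalerN; congr (_ *: _ - _ *: _); field; apply/andP; split; by rewrite gt_eqF.
have un : unit_sphere (T^-1 *: (u + v)).
  by rewrite /unit_sphere normrZ ger0_norm ?invr_ge0 ?normr_ge0 // mulVf.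
have := HH z (- z) (`|u| / T) (`|v| / T) bxz uz bxz' uz'.
rewrite e1 e2 => /(_ _ un).
rewrite normrZ ger0_norm ?invr_ge0 ?normr_ge0 // ler_pdivrMl // mulr1.
move=> /(_ _); apply.
rewrite /open_ball.
apply: (le_lt_trans (ler_normB _ _)).
rewrite un ux; lra.
Qed.

Lemma bjN {R : realType} {V : normedModType R} (u v : V) :
  BJorth u v -> BJorth u (- v).
Proof. by move=> H l; rewrite scalerN -scaleNr. Qed.

Lemma refl_eq {R : realType} {V : normedModType R} (HC : HCPP V) (u v : V) :
  BJorth u v -> `|u + v| = `|u - v|.
Proof.
move=> H; apply/eqP; rewrite eq_le.
have h1 := refl_le HC u v H.
have h2 := refl_le HC u (- v) (bjN u v H); rewrite opprK in h2.
by rewrite h1 h2.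
Qed.

Lemma reflst {R : realType} {V : normedModType R} (HC : HCPP V) (u v : V) s t :
  BJorth u v -> `|s *: u + t *: v| = `|s *: u - t *: v|.
Proof. by move=> H; apply: (refl_eq HC); apply: bj_scale. Qed.

Lemma reflst1 {R : realType} {V : normedModType R} (HC : HCPP V) (u v : V) t :
  BJorth u v -> `|u + t *: v| = `|u - t *: v|.
Proof. by move=> H; have := reflst HC u v 1 t H; rewrite scale1r. Qed.

Lemma bj_sym {R : realType} {V : normedModType R} (HC : HCPP V) (u v : V) :
  BJorth u v -> BJorth v u.
Proof.
move=> H l.
have e := reflst HC u v l 1 H; rewrite scale1r in e.
have : `|(l *: u + v) - (l *: u - v)| <= `|l *: u + v| + `|l *: u - v| by apply: ler_normB.
rewrite -e opprB addrC addrA addrNK (addrC v) -mulr2n normrMn.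
by rewrite mulr2n (addrC v); lra.
Qed.

Lemma cont {R : realType} {V : normedModType R} (d u : V) :
  continuous (fun a : R => `|d + a *: u|).
Proof.
move=> a.
apply: (continuous_comp (f := fun a : R => d + a *: u)); last exact: norm_continuous.
apply: continuousD; first exact: cst_continuous.
by apply: continuousZr_tmp.
Qed.

Lemma lowb {R : realType} {V : normedModType R} (d u : V) t :
  `|t| * `|u| - `|d| <= `|d + t *: u|.
Proof.
have : `|(d + t *: u) - d| <= `|d + t *: u| + `|d| := ler_normB _ _.
rewrite addrAC subrr add0r normrZ; lra.
Qed.

Lemma bj_exists {R : realType} {V : normedModType R} (u d : V) :
  u != 0 -> exists a, BJorth (d + a *: u) u.
Proof.
move=> u0.
have nu : 0 < `|u| by rewrite normr_gt0.
set K := 2 * `|d| / `|u|.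
have K0 : 0 <= K by rewrite /K divr_ge0 // mulr_ge0 // normr_ge0.
have KK : -K <= K by lra.
have [c cin cmin] := EVT_min KK (continuous_subspaceT (cont d u)).
exists c => l; rewrite -addrA -scalerDl.
case: (boolP ((c + l) \in `[-K, K])) => H; first by apply: cmin.
have h0 : `|d + c *: u| <= `|d + 0 *: u| by apply: cmin; rewrite in_itv /=; lra.
rewrite scale0r addr0 in h0.
move: H; rewrite in_itv /= -ler_norml -ltNge => H.
have h1 : K * `|u| < `|c + l| * `|u| by rewrite ltr_pM2r.
have h2 : K * `|u| = 2 * `|d| by rewrite /K; field; rewrite gt_eqF.
have := lowb d u (c + l); lra.
Qed.

Lemma lemU {R : realType} {V : normedModType R} (HC : HCPP V) (u v : V) c :
  u != 0 -> BJorth v u -> BJorth (v + c *: u) u -> c = 0.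
Proof.
move=> u0 H1 H2.
pose h t := `|v + t *: u|.
have ev t : h t = h (- t).
  by rewrite /h (reflst1 HC v u t H1) scaleNr.
have sy t : h (c + t) = h (c - t).
  by rewrite /h !scalerDl !addrA (reflst1 HC (v + c *: u) u t H2) scaleNr.
have per t : h (t + 2 * c) = h t.
  have -> : t + 2 * c = c + (t + c) by ring.
  by rewrite sy (ev t); congr h; ring.
have ind (n : nat) : h (n%:R * (2 * c)) = h 0.
  elim: n => [|n IH]; first by rewrite mul0r.
  by rewrite -[n.+1]addn1 natrD mulrDl mul1r per IH.
apply/eqP; apply/negP => /negP c0.
have nu : 0 < `|u| by rewrite normr_gt0.
have nc : 0 < `|c| by rewrite normr_gt0.
set y := (2 * `|v| + 1) / (2 * `|c| * `|u|).
have y0 : 0 <= y by rewrite /y divr_ge0 // ?mulr_ge0 ?addr_ge0 ?normr_ge0 // ltW.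
have := archi_boundP y0.
set n := Num.Def.archi_bound y => hn.
have hb := lowb v u (n%:R * (2 * c)).
rewrite -/(h _) ind /h scale0r addr0 in hb.
have e : `|n%:R * (2 * c)| * `|u| = n%:R * (2 * `|c| * `|u|).
  by rewrite !normrM !normr_nat !mulrA.
rewrite e in hb.
have : y * (2 * `|c| * `|u|) < n%:R * (2 * `|c| * `|u|).
  by rewrite ltr_pM2r // mulr_gt0 // mulr_gt0.
have -> : y * (2 * `|c| * `|u|) = 2 * `|v| + 1.
  by rewrite /y; field; rewrite !gt_eqF.
lra.
Qed.

Definition lc {R : realType} {V : normedModType R} (x y : V) (a b : R) := a *: x + b *: y.

Lemma lcD {R : realType} {V : normedModType R} (x y : V) a b c d :
  lc x y a b + lc x y c d = lc x y (a + c) (b + d).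
Proof. by rewrite /lc !scalerDl addrACA. Qed.

Lemma lcZ {R : realType} {V : normedModType R} (x y : V) k a b :
  k *: lc x y a b = lc x y (k * a) (k * b).
Proof. by rewrite /lc scalerDr !scalerA. Qed.

Lemma lcN {R : realType} {V : normedModType R} (x y : V) a b :
  - lc x y a b = lc x y (- a) (- b).
Proof. by rewrite /lc opprD -!scaleNr. Qed.

Lemma lcB {R : realType} {V : normedModType R} (x y : V) a b c d :
  lc x y a b - lc x y c d = lc x y (a - c) (b - d).
Proof. by rewrite lcN lcD. Qed.

Lemma lc10 {R : realType} {V : normedModType R} (x y : V) : lc x y 1 0 = x.
Proof. by rewrite /lc scale1r scale0r addr0. Qed.
Lemma lc01 {R : realType} {V : normedModType R} (x y : V) : lc x y 0 1 = y.
Proof. by rewrite /lc scale1r scale0r add0r. Qed.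
Lemma lc11 {R : realType} {V : normedModType R} (x y : V) : lc x y 1 1 = x + y.
Proof. by rewrite /lc !scale1r. Qed.
Lemma lc1N {R : realType} {V : normedModType R} (x y : V) : lc x y 1 (-1) = x - y.
Proof. by rewrite /lc scale1r scaleN1r. Qed.
Lemma lc_eq {R : realType} {V : normedModType R} (x y : V) a b c d :
  a = c -> b = d -> lc x y a b = lc x y c d.
Proof. by move=> -> ->. Qed.

Lemma conv {R : realType} {V : normedModType R} (v u : V) p q :
  0 <= p -> p < q -> `|v + p *: u| = `|v + q *: u| -> `|v + q *: u| <= `|v|.
Proof.
move=> p0 pq e.
have q0 : 0 < q by lra.
set th := p / q.
have th0 : 0 <= th by rewrite /th divr_ge0 // ltW.
have th1 : th < 1 by rewrite /th ltr_pdivrMr // mul1r.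
have E : v + p *: u = th *: (v + q *: u) + (1 - th) *: v.
  rewrite scalerDr scalerA /th divfK ?gt_eqF // scalerBl scale1r.
  by rewrite addrAC [_ *: v + _]addrC subrK.
have := ler_normD (th *: (v + q *: u)) ((1 - th) *: v).
have t1 : 0 <= 1 - th by lra.
rewrite -E (normrZ th) (normrZ (1 - th)) e (ger0_norm th0) (ger0_norm t1) => h.
have : (1 - th) * `|v + q *: u| <= (1 - th) * `|v| by lra.
by rewrite ler_pM2l ?subr_gt0.
Qed.

Lemma iso {R : realType} {V : normedModType R} (HC : HCPP V) (x y : V) :
  `|x| = `|y| -> BJorth (x + y) (x - y).
Proof.
move=> xy.
set u := x + y.
have [->|u0] := eqVneq u 0; first exact: bj0.
have [a Ha] := bj_exists u (x - y) u0.
set v := x - y + a *: u in Ha.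
pose h t := `|v + t *: u|.
have ev t : h t = h (- t) by rewrite /h (reflst1 HC v u t Ha) scaleNr.
have hab t : h `|t| = h t.
  by have [t0|t0] := leP 0 t; [rewrite ger0_norm | rewrite ltr0_norm // -ev].
have h0 : h 0 = `|v| by rewrite /h scale0r addr0.
have hge t : h 0 <= h t by rewrite h0; apply: Ha.
have E1 : v + (1 - a) *: u = lc x y 2 0.
  by rewrite /v /u -(lc11 x y) -(lc1N x y) !lcZ !lcD; apply: lc_eq; ring.
have E2 : v + (- (1 + a)) *: u = lc x y 0 (-2).
  by rewrite /v /u -(lc11 x y) -(lc1N x y) !lcZ !lcD; apply: lc_eq; ring.
have hx : `|lc x y 2 0| = `|lc x y 0 (-2)|.
  by rewrite /lc !scale0r addr0 add0r !normrZ normrN xy.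
have H1 : h (1 - a) = h (1 + a).
  by rewrite /h E1 hx -E2; exact: (esym (ev (1 + a))).
have [a0|a0] := eqVneq a 0.
  by move: Ha; rewrite /v a0 scale0r addr0 => Ha; apply: bj_sym.
have na : 0 < `|a| by rewrite normr_gt0.
have H2 : h (1 + `|a|) = h `|1 - `|a| |.
  rewrite hab; have [a1|a1] := leP 0 a.
    by rewrite ger0_norm.
  by rewrite ltr0_norm // opprK -H1.
have pq : `|1 - `|a| | < 1 + `|a| by rewrite ltr_norml; lra.
have := conv v u _ _ (normr_ge0 _) pq (esym H2).
rewrite -/(h _) -h0 => hq.
have Hq : BJorth (v + (1 + `|a|) *: u) u.
  move=> l; rewrite -(addrA v) -scalerDl.
  apply: le_trans hq _; exact: hge.
have := lemU HC u v _ u0 Ha Hq; lra.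
Qed.

Lemma bj1 {R : realType} {V : normedModType R} (e1 e2 : V) s :
  BJorth e1 e2 -> BJorth (s *: e1) e2.
Proof. by move=> H; have := bj_scale e1 e2 s 1 H; rewrite scale1r. Qed.


Lemma Nflipb {R : realType} {V : normedModType R} (HC : HCPP V) (e1 e2 : V) s t :
  BJorth e1 e2 -> `|lc e1 e2 s t| = `|lc e1 e2 s (- t)|.
Proof. by move=> H; rewrite /lc (reflst HC e1 e2 s t H) scaleNr. Qed.

Lemma Nflipa {R : realType} {V : normedModType R} (HC : HCPP V) (e1 e2 : V) s t :
  BJorth e1 e2 -> `|lc e1 e2 s t| = `|lc e1 e2 (- s) t|.
Proof.
move=> H; rewrite (Nflipb HC e1 e2 s t H) -normrN lcN opprK //.
Qed.

Lemma Nabs {R : realType} {V : normedModType R} (HC : HCPP V) (e1 e2 : V) s t :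
  BJorth e1 e2 -> `|lc e1 e2 s `|t| | = `|lc e1 e2 s t|.
Proof.
move=> H; have [t0|t0] := leP 0 t; first by rewrite ger0_norm.
by rewrite ltr0_norm // -(Nflipb HC e1 e2 s t H).
Qed.

Lemma Nswap {R : realType} {V : normedModType R} (HC : HCPP V) (e1 e2 : V) s t :
  `|e1| = 1 -> `|e2| = 1 -> `|lc e1 e2 s t| = `|lc e1 e2 t s|.
Proof.
move=> n1 n2.
have B := iso HC e1 e2 (etrans n1 (esym n2)).
have := reflst HC _ _ ((s + t) / 2) ((s - t) / 2) B.
rewrite -(lc11 e1 e2) -(lc1N e1 e2) !lcZ lcD lcB => E.
apply: etrans (etrans _ E) _; by congr `|_|; apply: lc_eq; field.
Qed.

Lemma sig_lt1 {R : realType} {V : normedModType R} (HC : HCPP V) (e1 e2 : V) s t :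
  `|e1| = 1 -> `|e2| = 1 -> BJorth e1 e2 -> `|lc e1 e2 s t| = 1 -> t != 0 ->
  `|s| < 1.
Proof.
move=> n1 n2 H N t0.
have Hs := bj1 e1 e2 s H.
have le1 : `|s| <= 1.
  by have := Hs t; rewrite normrZ n1 mulr1 -/(lc e1 e2 s t) N.
rewrite lt_neqAle le1 andbT; apply/negP => /eqP s1.
have e20 : e2 != 0 by rewrite -normr_eq0 n2 oner_neq0.
have Hq : BJorth (s *: e1 + t *: e2) e2.
  move=> l; rewrite -/(lc e1 e2 s t) N -addrA -scalerDl.
  by have := Hs (t + l); rewrite normrZ n1 mulr1 s1.
by move: t0; rewrite (lemU HC e2 (s *: e1) t e20 Hs Hq) eqxx.
Qed.

Lemma unit_main {R : realType} {V : normedModType R} (HC : HCPP V) (e1 e2 : V) s t :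
  `|e1| = 1 -> `|e2| = 1 -> BJorth e1 e2 -> `|lc e1 e2 s t| = 1 -> t != 0 ->
  s ^+ 2 + t ^+ 2 = 1.
Proof.
move=> n1 n2 H N t0.
have s1 := sig_lt1 HC e1 e2 s t n1 n2 H N t0.
set q := lc e1 e2 s t.
have B := iso HC e1 q (etrans n1 (esym N)).
set al := (1 - s) / (2 * t).
set ga := - (1 + s) / (2 * t).
have E := reflst HC _ _ al ga B.
have ee1 : e1 + q = lc e1 e2 (1 + s) t.
  by rewrite /q -{1}(lc10 e1 e2) lcD; apply: lc_eq; ring.
have ee2 : e1 - q = lc e1 e2 (1 - s) (- t).
  by rewrite /q -{1}(lc10 e1 e2) lcB; apply: lc_eq; ring.
rewrite ee1 ee2 !lcZ lcD lcB in E.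
set t' := (1 - s ^+ 2) / t.
have E1 : `|lc e1 e2 0 1| = `|lc e1 e2 t' (- s)|.
  apply: etrans (etrans _ E) _; by congr `|_|; apply: lc_eq; rewrite /al /ga /t'; field.
rewrite lc01 n2 (Nswap HC _ _ _ _ n1 n2) -(Nflipa HC e1 e2 _ _ H) in E1.
have ss : s ^+ 2 < 1.
  by rewrite -real_normK ?num_real // expr_lt1 // normr_ge0.
have tt' : t * t' = 1 - s ^+ 2 by rewrite /t'; field.
have ab : `|t| = `|t'|.
  have [h|h|//] := ltgtP `|t| `|t'|.
    have := conv (s *: e1) e2 _ _ (normr_ge0 _) h.
    rewrite -/(lc e1 e2 s _) -/(lc e1 e2 s _) !(Nabs HC) // -E1 -/q N normrZ n1 mulr1.
    by move=> /(_ erefl); lra.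
  have := conv (s *: e1) e2 _ _ (normr_ge0 _) h.
  rewrite -/(lc e1 e2 s _) -/(lc e1 e2 s _) !(Nabs HC) // -E1 -/q N normrZ n1 mulr1.
  by move=> /(_ erefl); lra.
have sq : t ^+ 2 = t' ^+ 2 by rewrite -real_normK ?num_real // ab real_normK ?num_real.
have T0 : 0 < t ^+ 2 by rewrite exprn_even_gt0.
nra.
Qed.

Lemma euclid {R : realType} {V : normedModType R} (HC : HCPP V) (e1 e2 : V) s t :
  `|e1| = 1 -> `|e2| = 1 -> BJorth e1 e2 ->
  `|lc e1 e2 s t| ^+ 2 = s ^+ 2 + t ^+ 2.
Proof.
move=> n1 n2 H.
set n := `|lc e1 e2 s t|.
have Hs := bj1 e1 e2 s H.
have sn : `|s| <= n by have := Hs t; rewrite normrZ n1 mulr1.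
have [n0|n0] := eqVneq n 0.
  have s0 : s = 0 by apply/eqP; rewrite -normr_eq0 eq_le normr_ge0 andbT -n0.
  move: n0; rewrite /n /lc s0 scale0r add0r normrZ n2 mulr1 => /eqP.
  by rewrite normr_eq0 => /eqP ->; rewrite expr0n /= normr0 expr0n /= addr0.
have np : 0 < n by rewrite lt_def n0 normr_ge0.
have Nq : `|lc e1 e2 (n^-1 * s) (n^-1 * t)| = 1.
  by rewrite -lcZ normrZ ger0_norm ?invr_ge0 ?normr_ge0 // mulVf.
have [t0|t0] := eqVneq t 0.
  move: n0; rewrite /n /lc t0 scale0r addr0 normrZ n1 mulr1 => _.
  by rewrite expr0n /= addr0 real_normK ?num_real.
have t0' : n^-1 * t != 0 by rewrite mulf_neq0 // invr_eq0.
have := unit_main HC e1 e2 _ _ n1 n2 H Nq t0'.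
rewrite !exprMn -!mulrDr => h.
have : n ^+ 2 * (n^-1 ^+ 2 * (s ^+ 2 + t ^+ 2)) = n ^+ 2 by rewrite h mulr1.
by rewrite mulrA -exprMn mulfV // expr1n mul1r.
Qed.

Lemma normalize1 {R : realType} {V : normedModType R} (u : V) :
  u != 0 -> `|(`|u|^-1) *: u| = 1.
Proof.
move=> u0; rewrite normrZ ger0_norm ?invr_ge0 ?normr_ge0 // mulVf //.
by rewrite normr_eq0.
Qed.

Lemma perp_decomp {R : realType} {V : normedModType R} (HC : HCPP V) (e1 y : V) :
  e1 != 0 -> exists a v, BJorth e1 v /\ y = a *: e1 + v.
Proof.
move=> e0; have [a Ha] := bj_exists e1 y e0.
exists (- a), (y + a *: e1); split; first exact: bj_sym.
by rewrite addrCA scaleNr addNr addr0.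
Qed.

Lemma perp_norm {R : realType} {V : normedModType R} (e1 v : V) :
  BJorth e1 v -> v != 0 -> BJorth e1 (`|v|^-1 *: v) /\ `|(`|v|^-1) *: v| = 1.
Proof.
move=> H v0; split; last exact: normalize1.
by have := bj_scale e1 v 1 (`|v|^-1) H; rewrite scale1r.
Qed.

Lemma exists_perp {R : realType} {V : normedModType R} (HC : HCPP V) (e1 : V) :
  dim_gt1 V -> e1 != 0 -> exists e2, `|e2| = 1 /\ BJorth e1 e2.
Proof.
move=> [p [q D]] e0.
have [ap [vp [Hp Ep]]] := perp_decomp HC e1 p e0.
have [vp0|vp0] := eqVneq vp 0; last first.
  by have [? ?] := perp_norm _ _ Hp vp0; exists (`|vp|^-1 *: vp).
have [aq [vq [Hq Eq]]] := perp_decomp HC e1 q e0.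
have [vq0|vq0] := eqVneq vq 0; last first.
  by have [? ?] := perp_norm _ _ Hq vq0; exists (`|vq|^-1 *: vq).
rewrite vp0 addr0 in Ep; rewrite vq0 addr0 in Eq.
have [a0 b0] : aq = 0 /\ - ap = 0.
  by apply: D; rewrite Ep Eq !scalerA -scalerDl mulNr mulrC subrr scale0r.
have ap0 : ap = 0 by lra.
have p0 : p = 0 by rewrite Ep ap0 scale0r.
have [] := D 1 0; first by rewrite p0 scaler0 scale0r addr0.
by move=> /eqP; rewrite oner_eq0.
Qed.

Lemma frame {R : realType} {V : normedModType R} (HC : HCPP V) (e1 y : V) :
  dim_gt1 V -> `|e1| = 1 ->
  exists e2 a b, [/\ `|e2| = 1, BJorth e1 e2 & y = lc e1 e2 a b].
Proof.
move=> D n1.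
have e0 : e1 != 0 by rewrite -normr_eq0 n1 oner_neq0.
have [a [v [Hv Ey]]] := perp_decomp HC e1 y e0.
have [v0|v0] := eqVneq v 0.
  have [e2 [n2 H2]] := exists_perp HC e1 D e0.
  exists e2, a, 0; split => //.
  by rewrite Ey v0 /lc scale0r.
have [H2 n2] := perp_norm _ _ Hv v0.
exists (`|v|^-1 *: v), a, `|v|; split => //.
rewrite Ey /lc scalerA mulfV ?scale1r //.
by rewrite normr_eq0.
Qed.

Lemma unit_exists {R : realType} {V : normedModType R} :
  dim_gt1 V -> exists e : V, `|e| = 1.
Proof.
move=> [p [q D]].
have [p0|p0] := eqVneq p 0.
  have [] := D 1 0; first by rewrite p0 scaler0 scale0r addr0.
  by move=> /eqP; rewrite oner_eq0.
by exists (`|p|^-1 *: p); apply: normalize1.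
Qed.

Lemma plane {R : realType} {V : normedModType R} (HC : HCPP V) (x z : V) :
  dim_gt1 V -> exists e1 e2 x1 x2 z1 z2,
    [/\ forall s t, `|lc e1 e2 s t| ^+ 2 = s ^+ 2 + t ^+ 2,
        x = lc e1 e2 x1 x2 & z = lc e1 e2 z1 z2].
Proof.
move=> D.
have [e1 [c [n1 Ex]]] : exists e1 c, `|e1| = 1 /\ x = c *: e1.
  have [x0|x0] := eqVneq x 0.
    have [e ne] := unit_exists D.
    by exists e, 0; rewrite scale0r.
  exists (`|x|^-1 *: x), `|x|; split; first exact: normalize1.
  by rewrite scalerA mulfV ?scale1r // normr_eq0.
have [e2 [a [b [n2 H Ez]]]] := frame HC e1 z D n1.
exists e1, e2, c, 0, a, b; split => //.
  by move=> s t; apply: euclid.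
by rewrite /lc scale0r addr0.
Qed.

Definition ipd {R : realType} {V : normedModType R} (x y : V) :=
  (`|x + y| ^+ 2 - `|x - y| ^+ 2) / 4.

Lemma ip_hom {R : realType} {V : normedModType R} (HC : HCPP V) (D : dim_gt1 V)
  a (x z : V) : ipd (a *: x) z = a * ipd x z.
Proof.
have [e1 [e2 [x1 [x2 [z1 [z2 [Eu Ex Ez]]]]]]] := plane HC x z D.
by rewrite /ipd Ex Ez lcZ !lcD !lcB !Eu; field.
Qed.

Lemma ip_par {R : realType} {V : normedModType R} (HC : HCPP V) (D : dim_gt1 V)
  (x z : V) : `|x + z| ^+ 2 + `|x - z| ^+ 2 = 2 * `|x| ^+ 2 + 2 * `|z| ^+ 2.
Proof.
have [e1 [e2 [x1 [x2 [z1 [z2 [Eu Ex Ez]]]]]]] := plane HC x z D.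
by rewrite Ex Ez !lcD !lcB !Eu; ring.
Qed.

Lemma ip_sym {R : realType} {V : normedModType R} (x z : V) : ipd x z = ipd z x.
Proof. by rewrite /ipd [z + x]addrC -[`|z - x|]normrN opprB. Qed.

Lemma ip_add {R : realType} {V : normedModType R} (HC : HCPP V) (D : dim_gt1 V)
  (x y z : V) : ipd (x + y) z = ipd x z + ipd y z.
Proof.
have P1 := ip_par HC D (x + z) (y + z).
have P2 := ip_par HC D (x - z) (y - z).
have e1 : (x + z) + (y + z) = (x + y) + 2 *: z by rewrite addrACA scaler_nat mulr2n.
have e2 : (x + z) - (y + z) = x - y by rewrite opprD addrACA subrr addr0.
have e3 : (x - z) + (y - z) = (x + y) - 2 *: z by rewrite addrACA scaler_nat mulr2n opprD.
have e4 : (x - z) - (y - z) = x - y by rewrite opprB addrA subrK.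
rewrite e1 e2 in P1; rewrite e3 e4 in P2.
have H2 : ipd (x + y) (2 *: z) = 2 * ipd (x + y) z.
  by rewrite ip_sym (ip_hom HC D) ip_sym.
move: H2; rewrite /ipd; lra.
Qed.

Lemma hard_dir {R : realType} {V : normedModType R} (HC : HCPP V) (D : dim_gt1 V) :
  is_inner_product_space V.
Proof.
exists ipd; split.
- exact: ip_sym.
- by move=> a x y z; rewrite ip_add // ip_hom.
- move=> x; rewrite /ipd subrr normr0 expr0n /= subr0.
  have -> : `|x + x| ^+ 2 / 4 = `|x| ^+ 2.
    by rewrite -mulr2n normrMn -mulr_natr; field.
  by rewrite sqrtr_sqr normr_id.
Qed.

Lemma easy_dir {R : realType} {V : normedModType R} :
  is_inner_product_space V -> HCPP V.
Proof.
move=> [ip [sy li nr]].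
have ip0 z : ip 0 z = 0.
  have := li 1 0 0 z; rewrite scaler0 addr0 mul1r => h; lra.
have ipZ a x z : ip (a *: x) z = a * ip x z.
  by have := li a x 0 z; rewrite addr0 ip0 addr0.
have ipD x y z : ip (x + y) z = ip x z + ip y z.
  by have := li 1 x y z; rewrite scale1r mul1r.
have ipge x : 0 <= ip x x.
  rewrite leNgt; apply/negP => h.
  have : `|x| = 0 by rewrite nr ltr0_sqrtr.
  by move/normr0_eq0 => x0; move: h; rewrite x0 ip0 ltxx.
have nsq x : `|x| ^+ 2 = ip x x by rewrite nr sqr_sqrtr.
have expand a b x z : `|a *: x + b *: z| ^+ 2 =
    a ^+ 2 * ip x x + 2 * a * b * ip x z + b ^+ 2 * ip z z.
  rewrite nsq !ipD !ipZ (sy x (a *: x + b *: z)) (sy z (a *: x + b *: z)) !ipD !ipZ (sy z x).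
  ring.
have orth x z : BJorth x z -> `|z| = 1 -> ip x z = 0.
  move=> H n1.
  have := H (- ip x z).
  have := expand 1 (- ip x z) x z; rewrite scale1r => e.
  have zz : ip z z = 1 by rewrite -nsq n1 expr1n.
  move=> h.
  have h2 : `|x| ^+ 2 <= `|x + - ip x z *: z| ^+ 2.
    by rewrite lerXn2r // ?nnegrE ?normr_ge0.
  rewrite e zz nsq in h2.
  have : ip x z ^+ 2 <= 0 by nra.
  by move=> h3; apply/eqP; rewrite -sqrf_eq0 eq_le h3 sqr_ge0.
move=> x r ux r0; split; [exact: ux|exact: ux|exact: r0|exact: ltr01|].
move=> z w a b xz uz xw uw _ un.
have e1 := expand a b x z.
have e2 := expand a (b * 1) x w.
rewrite (orth x z xz uz) in e1; rewrite (orth x w xw uw) in e2.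
rewrite -!nsq ux uz un in e1; rewrite -!nsq ux uw in e2.
rewrite !expr1n !mulr1 !mulr0 !addr0 in e1 e2.
have : `|a *: x + (b * 1) *: w| ^+ 2 = 1 by rewrite mulr1 e2 -e1.
have := normr_ge0 (a *: x + (b * 1) *: w).
nra.
Qed.

Theorem mainTheorem20 (R : realType) (V : completeNormedModType R) :
  dim_gt1 V ->
  (is_inner_product_space V <->
   forall (x : V) (r : R), unit_sphere x -> 0 < r -> is_CPP x x r 1).
Proof.
move=> D; split.
- exact: easy_dir.
- by move=> HC; apply: hard_dir.
Qed.
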